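(* Let $Y$ be an upwards skip-free Lévy chain with $h=1$, i.e. a compound Poisson process whose Lévy measure $\nu$ satisfies $\mathrm{supp}(\nu)\subset\mathbb Z$, $\mathrm{supp}(\nu|_{(0,\infty)})=\{1\}$ and $\nu(\{1\})>0$. Let $q\ge0$ and let $W^{(q)}$, $Z^{(q)}$ be its scale functions. Then for all $n\in\mathbb N\cup\{0\}$: $$W^{(q)}(n+1)=W^{(q)}(0)+\sum_{k=1}^{n+1}W^{(q)}(n+1-k)\frac{q+\nu((-\infty,-k])}{\nu(\{1\})},\qquad W^{(q)}(0)=\frac1{\nu(\{1\})},$$ and, with $\widetilde{Z^{(q)}}:=Z^{(q)}-1$, $$\widetilde{Z^{(q)}}(n+1)=(n+1)\frac{q}{\nu(\{1\})}+\sum_{k=1}^{n}\widetilde{Z^{(q)}}(n+1-k)\frac{q+\nu((-\infty,-k])}{\nu(\{1\})},\qquad \widetilde{Z^{(q)}}(0)=0.$$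
   Context: The Laplace exponent of $Y$ is $\varphi(\beta)=\int_{\mathbb R}(e^{\beta x}-1)\nu(dx)$, $\Re\beta\ge0$; $\varphi|_{[0,\infty)}$ is strictly convex with $\varphi(\beta)\to\infty$ as $\beta\to\infty$. Let $\Phi(q)$ be the largest root of $\varphi(\beta)=q$ in $[0,\infty)$. The scale function $W^{(q)}:\mathbb R\to[0,\infty)$ vanishes on $(-\infty,0)$ and on $[0,\infty)$ is the unique right-continuous, piecewise constant function of exponential order with $\int_0^\infty e^{-\beta x}W^{(q)}(x)dx=\frac{e^{\beta}-1}{\beta(\varphi(\beta)-q)}$ for $\beta>\Phi(q)$; and $Z^{(q)}(x)=1+q\int_0^{\lfloor x\rfloor}W^{(q)}(y)dy$, $x\in\mathbb R$. *)

(* Defs.v *)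
From Stdlib Require Import Reals ZArith ClassicalEpsilon.
Open Scope R_scope.

(* Total value of a real series (meaningful when it converges). *)
Definition Rsum (u : nat -> R) : R :=
  epsilon (inhabits 0) (fun l => infinite_sum u l).

(* Value of a Riemann integral int_a^b f (meaningful when integrable). *)
Definition Rint (f : R -> R) (a b : R) : R :=
  epsilon (inhabits 0)
    (fun v => exists pr : Riemann_integrable f a b, RiemannInt pr = v).

(* sum_{k=1}^{n} f k  (= 0 when n = 0) *)
Fixpoint sum_range (f : nat -> R) (n : nat) : R :=
  match n with
  | O => 0
  | S m => sum_range f m + f (S m)
  end.

(* Floor function: up x is the unique integer with x < up x <= x + 1. *)
Definition Rfloor (x : R) : R := IZR (up x - 1).

(* The Levy measure nu on Z is encoded by its point masses nu z = nu({z}).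
   Upwards skip-free compound Poisson chain with h = 1: *)
Definition skip_free_levy (nu : Z -> R) : Prop :=
  (forall z, 0 <= nu z) /\
  nu 0%Z = 0 /\
  (forall z, (2 <= z)%Z -> nu z = 0) /\
  0 < nu 1%Z /\
  (* finite total mass (compound Poisson) *)
  (exists s, infinite_sum (fun j => nu (- (Z.of_nat j + 1))%Z) s).

(* Laplace exponent phi(b) = int (e^{b x} - 1) nu(dx) *)
Definition laplace_exp (nu : Z -> R) (b : R) : R :=
  nu 1%Z * (exp b - 1)
  + Rsum (fun j => nu (- (Z.of_nat j + 1))%Z * (exp (- (INR j + 1) * b) - 1)).

Definition nu_tail (nu : Z -> R) (k : nat) : R :=
  Rsum (fun j => nu (- Z.of_nat (j + k))%Z).

Definition is_Phi (nu : Z -> R) (q p : R) : Prop :=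
  0 <= p /\ laplace_exp nu p = q /\
  forall b, 0 <= b -> laplace_exp nu b = q -> b <= p.

Definition improper_int_0_inf (f : R -> R) (l : R) : Prop :=
  (forall T, 0 <= T -> inhabited (Riemann_integrable f 0 T)) /\
  forall eps, eps > 0 -> exists M, forall T (pr : Riemann_integrable f 0 T),
      T >= M -> Rabs (RiemannInt pr - l) < eps.

Definition piecewise_const_rc (W : R -> R) : Prop :=
  (forall x, 0 <= x -> exists d, d > 0 /\
     forall y, x <= y < x + d -> W y = W x) /\
  (forall x, 0 < x -> exists d, d > 0 /\
     forall y z, x - d < y < x -> x - d < z < x -> W y = W z).

Definition exp_order (W : R -> R) : Prop :=
  exists C a, forall x, 0 <= x -> Rabs (W x) <= C * exp (a * x).

Definition is_scale_W (nu : Z -> R) (q : R) (W : R -> R) : Prop :=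
  (forall x, x < 0 -> W x = 0) /\
  (forall x, 0 <= W x) /\
  piecewise_const_rc W /\
  exp_order W /\
  forall p, is_Phi nu q p -> forall b, b > p ->
    improper_int_0_inf (fun x => exp (- b * x) * W x)
      ((exp b - 1) / (b * (laplace_exp nu b - q))).

Definition Zscale (q : R) (W : R -> R) (x : R) : R :=
  1 + q * Rint W 0 (Rfloor x).

(* Main.v *)
Require Import Defs.
From Stdlib Require Import Reals ZArith Lra Lia ClassicalEpsilon.
From Coquelicot Require Import Coquelicot.
Open Scope R_scope.

Lemma sum_range_ext_in (f g : nat -> R) (n : nat) :
  (forall k, (1 <= k <= n)%nat -> f k = g k) -> sum_range f n = sum_range g n.
Proof.
  induction n; intros h; simpl; auto.
  rewrite IHn by (intros k hk; apply h; lia). rewrite h by lia. reflexivity.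
Qed.

Lemma sum_range_shift (f : nat -> R) (n : nat) :
  sum_range f (S n) = f 1%nat + sum_range (fun k => f (S k)) n.
Proof. induction n; simpl in *. ring. rewrite IHn. ring. Qed.

Lemma sum_range_plus (f g : nat -> R) (n : nat) :
  sum_range (fun k => f k + g k) n = sum_range f n + sum_range g n.
Proof. induction n; simpl. ring. rewrite IHn. ring. Qed.

Lemma sum_range_minus (f g : nat -> R) (n : nat) :
  sum_range (fun k => f k - g k) n = sum_range f n - sum_range g n.
Proof. induction n; simpl. ring. rewrite IHn. ring. Qed.

Lemma sum_range_scal (f : nat -> R) (a : R) (n : nat) :
  sum_range (fun k => a * f k) n = a * sum_range f n.
Proof. induction n; simpl. ring. rewrite IHn. ring. Qed.

Lemma sum_range_nonneg (f : nat -> R) (n : nat) :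
  (forall k, (1 <= k <= n)%nat -> 0 <= f k) -> 0 <= sum_range f n.
Proof.
  induction n; intros h; simpl. lra.
  assert (0 <= sum_range f n) by (apply IHn; intros; apply h; lia).
  assert (0 <= f (S n)) by (apply h; lia). lra.
Qed.

Section WS.
Variable w0 : R.
Variable c : nat -> R.

Fixpoint wv (n : nat) : nat -> R :=
  match n with
  | O => fun _ => w0
  | S m => fun i => if (i <=? m)%nat then wv m i
                    else w0 + sum_range (fun k => wv m (S m - k) * c k) (S m)
  end.

Definition w (n : nat) : R := wv n n.

Lemma wv_stable (n i : nat) : (i <= n)%nat -> wv n i = w i.
Proof.
  induction n; intros h.
  - assert (i = 0%nat) by lia. subst. reflexivity.
  - destruct (Nat.leb_spec i n) as [h1|h1].
    + cbn [wv]. rewrite (proj2 (Nat.leb_le i n) h1). apply IHn; auto.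
    + assert (i = S n) by lia. subst. reflexivity.
Qed.

Lemma w_0 : w 0 = w0.
Proof. reflexivity. Qed.

Lemma w_rec (n : nat) : w n = w0 + sum_range (fun k => w (n - k) * c k) n.
Proof.
  destruct n. simpl. unfold w; simpl. ring.
  unfold w at 1. cbn [wv]. rewrite (proj2 (Nat.leb_gt (S n) n) ltac:(lia)). f_equal.
  apply sum_range_ext_in. intros k hk. rewrite wv_stable by lia. reflexivity.
Qed.

Lemma w_diff (n : nat) :
  w (S n) = w n + c 1%nat * w n + sum_range (fun k => w (n - k) * (c (S k) - c k)) n.
Proof.
  rewrite (w_rec (S n)), (w_rec n).
  rewrite sum_range_shift.
  replace (sum_range (fun k => w (n - k) * (c (S k) - c k)) n) with
    (sum_range (fun k => w (S n - S k) * c (S k)) n - sum_range (fun k => w (n - k) * c k) n).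
  2:{ rewrite <- sum_range_minus. apply sum_range_ext_in. intros k hk.
      replace (S n - S k)%nat with (n - k)%nat by lia. ring. }
  replace (S n - 1)%nat with n by lia. rewrite (w_rec n). ring.
Qed.

Fixpoint Sw (n : nat) : R := match n with O => 0 | S m => Sw m + w m end.

Lemma Sw_rec (n : nat) :
  Sw (S n) = INR (S n) * w0 + sum_range (fun k => Sw (S n - k) * c k) n.
Proof.
  induction n.
  - simpl. rewrite w_0. ring.
  - change (Sw (S (S n))) with (Sw (S n) + w (S n)). rewrite IHn.
    rewrite (w_rec (S n)).
    rewrite (sum_range_ext_in (fun k => Sw (S (S n) - k) * c k)
       (fun k => Sw (S n - k) * c k + w (S n - k) * c k)).
    2:{ intros k hk. replace (S (S n) - k)%nat with (S (S n - k)) by lia. simpl. ring. }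
    rewrite sum_range_plus.
    change (sum_range (fun k => Sw (S n - k) * c k) (S n)) with
      (sum_range (fun k => Sw (S n - k) * c k) n + Sw (S n - S n) * c (S n)).
    rewrite Nat.sub_diag. change (Sw 0) with 0. rewrite (S_INR (S n)). ring.
Qed.

Hypothesis hw0 : 0 <= w0.
Hypothesis hc : forall k, (1 <= k)%nat -> 0 <= c k.

Lemma w_nonneg (n : nat) : 0 <= w n.
Proof.
  induction n as [n IH] using (well_founded_induction lt_wf).
  rewrite w_rec.
  assert (0 <= sum_range (fun k => w (n - k) * c k) n).
  { apply sum_range_nonneg. intros k hk. apply Rmult_le_pos.
    destruct n. lia. apply IH. lia. apply hc. lia. }
  lra.
Qed.

Hypothesis hdec : forall k, (1 <= k)%nat -> c (S k) <= c k.

Lemma w_step (n : nat) : w (S n) <= (1 + c 1%nat) * w n.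
Proof.
  rewrite w_diff.
  assert (sum_range (fun k => w (n - k) * (c (S k) - c k)) n <= 0).
  { assert (0 <= sum_range (fun k => w (n - k) * (c k - c (S k))) n).
    { apply sum_range_nonneg. intros k hk. apply Rmult_le_pos. apply w_nonneg.
      assert (h := hdec k ltac:(lia)). lra. }
    replace (sum_range (fun k => w (n - k) * (c (S k) - c k)) n) with
      ((-1) * sum_range (fun k => w (n - k) * (c k - c (S k))) n). lra.
    rewrite <- sum_range_scal. apply sum_range_ext_in. intros; ring. }
  assert (0 <= w n) by apply w_nonneg. lra.
Qed.

Lemma w_bound (n : nat) : w n <= w0 * (1 + c 1%nat) ^ n.
Proof.
  induction n. simpl. rewrite w_0. lra.
  simpl. assert (h := w_step n). assert (0 <= 1 + c 1%nat) by (assert (h1 := hc 1%nat ltac:(lia)); lra).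
  assert ((1 + c 1%nat) * w n <= (1 + c 1%nat) * (w0 * (1 + c 1%nat) ^ n)) by (apply Rmult_le_compat_l; auto).
  lra.
Qed.

End WS.

Lemma radius_ge (a : nat -> R) (r M x : R) :
  (forall n, Rabs (a n * r ^ n) <= M) -> Rabs x < r -> Rbar_lt (Rabs x) (CV_radius a).
Proof.
  intros hM hx. destruct (CV_radius_bounded a) as [hub _].
  apply Rbar_lt_le_trans with (Finite r). simpl. exact hx.
  apply hub. exists M. exact hM.
Qed.

Lemma sum_f_R0_range (f : nat -> R) (n : nat) : sum_f_R0 f n = f 0%nat + sum_range f n.
Proof. induction n; simpl. ring. rewrite IHn. ring. Qed.

Lemma is_series_delta (v : R) (s : R) :
  is_series (fun n => (if (n =? 0)%nat then v else 0) * s ^ n) v.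
Proof.
  apply is_series_Reals. intros eps he. exists 0%nat. intros n _.
  replace (sum_f_R0 (fun n => (if (n =? 0)%nat then v else 0) * s ^ n) n) with v.
  unfold R_dist. rewrite Rminus_diag, Rabs_R0. exact he.
  rewrite sum_f_R0_range. rewrite (sum_range_ext_in _ (fun _ => 0)).
  - replace (sum_range (fun _ => 0) n) with 0 by (clear; induction n; simpl; [ring| rewrite <- IHn; ring]).
    simpl. ring.
  - intros k hk. destruct k. lia. simpl. ring.
Qed.

Section GEN.
Variable w0 : R.
Variable c : nat -> R.
Hypothesis hw0 : 0 <= w0.
Hypothesis hc : forall k, (1 <= k)%nat -> 0 <= c k.
Hypothesis hdec : forall k, (1 <= k)%nat -> c (S k) <= c k.

Definition pco (k : nat) : R :=
  match k with O => 1 | S O => -(1 + c 1%nat) | S (S j) => c (S j) - c (S (S j)) end.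

Lemma c_le_c1 (k : nat) : (1 <= k)%nat -> c k <= c 1%nat.
Proof.
  induction k; intros h. lia. destruct k. lra.
  assert (h1 := hdec (S k) ltac:(lia)). assert (h2 := IHk ltac:(lia)). lra.
Qed.

Lemma pco_bound (n : nat) : Rabs (pco n * 1 ^ n) <= 1 + c 1%nat.
Proof.
  rewrite pow1, Rmult_1_r. assert (h1 := hc 1%nat ltac:(lia)).
  destruct n as [|[|j]]; simpl pco.
  - rewrite Rabs_R1. lra.
  - rewrite Rabs_Ropp, Rabs_right; lra.
  - assert (h2 := hdec (S j) ltac:(lia)). assert (h3 := hc (S (S j)) ltac:(lia)).
    assert (h4 := c_le_c1 (S j) ltac:(lia)).
    rewrite Rabs_right; lra.
Qed.

Lemma PS_mult_pw (n : nat) : PS_mult pco (w w0 c) n = if (n =? 0)%nat then w0 else 0.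
Proof.
  unfold PS_mult. rewrite sum_f_R0_range. destruct n.
  - simpl. rewrite w_0. ring.
  - rewrite sum_range_shift. simpl (S n =? 0)%nat.
    replace (S n - 0)%nat with (S n) by lia. replace (S n - 1)%nat with n by lia.
    rewrite (sum_range_ext_in _ (fun k => (c k - c (S k)) * w w0 c (n - k))).
    2:{ intros k hk. destruct k. lia. simpl pco. replace (S n - S (S k))%nat with (n - S k)%nat by lia. reflexivity. }
    rewrite (w_diff w0 c n). simpl pco.
    replace (sum_range (fun k => (c k - c (S k)) * w w0 c (n - k)) n) with
      ((-1) * sum_range (fun k : nat => w w0 c (n - k) * (c (S k) - c k)) n).
    ring. rewrite <- sum_range_scal. apply sum_range_ext_in. intros; ring.
Qed.

Lemma gen_series (s : R) : 0 <= s -> s * (1 + c 1%nat) < 1 ->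
  is_pseries (w w0 c) s (PSeries (w w0 c) s) /\
  PSeries pco s * PSeries (w w0 c) s = w0 /\
  Rbar_lt (Rabs s) (CV_radius (w w0 c)) /\ s < 1.
Proof.
  intros hs hsK. set (K := 1 + c 1%nat) in *.
  assert (hK : 1 <= K) by (unfold K; assert (h1 := hc 1%nat ltac:(lia)); lra).
  assert (s * (K-1) >= 0) by (apply Rle_ge, Rmult_le_pos; lra).
  assert (hs1 : s < 1) by lra.
  assert (hrw : Rbar_lt (Rabs s) (CV_radius (w w0 c))).
  { apply (radius_ge _ (/K) w0). intros n.
    rewrite Rabs_right. 2:{ apply Rle_ge, Rmult_le_pos. apply w_nonneg; auto. apply pow_le. left; apply Rinv_0_lt_compat; lra. }
    assert (h := w_bound w0 c hw0 hc hdec n). fold K in h.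
    assert (0 < / K ^ n) by (apply Rinv_0_lt_compat, pow_lt; lra).
    rewrite pow_inv. apply Rle_trans with (w0 * K ^ n * / K ^ n).
    apply Rmult_le_compat_r; lra. right. field. apply pow_nonzero; lra.
    rewrite Rabs_right by lra. apply (Rmult_lt_reg_r K). lra. rewrite Rinv_l by lra. lra. }
  assert (hrp : Rbar_lt (Rabs s) (CV_radius pco)).
  { apply (radius_ge _ 1 (1 + c 1%nat)). apply pco_bound. rewrite Rabs_right; lra. }
  assert (hw := PSeries_correct _ _ (CV_radius_inside _ _ hrw)).
  assert (hp := PSeries_correct _ _ (CV_radius_inside _ _ hrp)).
  split; [exact hw|]. split; [|split; auto].
  rewrite <- PSeries_mult by auto.
  rewrite (PSeries_ext _ (fun n => if (n =? 0)%nat then w0 else 0)) by apply PS_mult_pw.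
  apply is_pseries_unique. apply is_pseries_R. apply is_series_delta.
Qed.

End GEN.

Lemma exp_int (b x1 x2 : R) : b <> 0 ->
  is_RInt (fun x => exp (-b*x)) x1 x2 ((exp (-b*x1) - exp (-b*x2))/b).
Proof.
  intros hb.
  replace ((exp (-b*x1) - exp (-b*x2))/b) with
    (minus ((fun x => - exp (-b*x) / b) x2) ((fun x => - exp (-b*x) / b) x1)).
  2:{ unfold minus, plus, opp; simpl. field. exact hb. }
  apply (is_RInt_derive (fun x => - exp (-b*x) / b) (fun x => exp (-b*x))).
  - intros x _. auto_derive. auto. field. exact hb.
  - intros x _. exact (ex_derive_continuous (fun x => exp (-b*x)) x ltac:(auto_derive; auto)).
Qed.

Lemma tail_bound (g : R -> R) (C e u T : R) : e > 0 -> u <= T ->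
  (forall x, u <= x <= T -> Rabs (g x) <= C * exp (-e*x)) ->
  ex_RInt g u T -> Rabs (RInt g u T) <= C * exp (-e*u) / e.
Proof.
  intros he huT hb hg.
  assert (hC : 0 <= C).
  { assert (h := hb u (conj (Rle_refl u) huT)).
    assert (0 < exp (-e*u)) by apply exp_pos.
    assert (0 <= Rabs (g u)) by apply Rabs_pos.
    destruct (Rle_or_lt 0 C); auto. nra. }
  assert (hI := exp_int e u T ltac:(lra)).
  assert (hI2 : is_RInt (fun x => C * exp (-e*x)) u T (C * ((exp (-e*u) - exp (-e*T))/e))).
  { apply (is_RInt_scal _ u T C _ hI). }
  assert (h := norm_RInt_le g (fun x => C * exp (-e*x)) u T (RInt g u T) _ huT hb (RInt_correct _ _ _ hg) hI2).
  change (norm (RInt g u T)) with (Rabs (RInt g u T)) in h.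
  assert (0 < exp (-e*T)) by apply exp_pos.
  assert (C * ((exp (-e * u) - exp (-e * T)) / e) <= C * exp (-e*u) / e).
  { unfold Rdiv. rewrite <- Rmult_assoc. apply Rmult_le_compat_r.
    left; apply Rinv_0_lt_compat; lra. nra. }
  lra.
Qed.

Lemma RInt_zero_ext (g : R -> R) (u v : R) :
  (forall x, Rmin u v < x < Rmax u v -> g x = 0) -> RInt g u v = 0.
Proof.
  intros h. rewrite (RInt_ext g (fun _ => 0) u v h).
  rewrite RInt_const. unfold scal; simpl. unfold mult; simpl. ring.
Qed.

Lemma uniq_laplace (D : R -> R) (C a b0 : R) :
  (forall x, 0 <= x -> exists d, d > 0 /\ forall y, x <= y < x + d -> D y = D x) ->
  (forall x, 0 <= x -> Rabs (D x) <= C * exp (a * x)) ->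
  (forall b, b > b0 -> (forall T, 0 <= T -> ex_RInt (fun x => exp (-b*x) * D x) 0 T) /\
     forall eps, eps > 0 -> exists M, forall T, T >= M ->
        Rabs (RInt (fun x => exp (-b*x) * D x) 0 T) < eps) ->
  forall x, 0 <= x -> D x = 0.
Proof.
  intros hrc hexp hL x hx.
  destruct (Req_dec (D x) 0) as [|hDx]; auto. exfalso.
  set (E := fun y => forall z, 0 <= z -> D z <> 0 -> y <= z).
  destruct (completeness E) as [x0 [hub hlub]].
  { exists x. intros y hy. apply hy; auto. }
  { exists 0. intros z hz _. exact hz. }
  assert (hx0 : 0 <= x0). { apply hub. intros z hz _; exact hz. }
  assert (hle : forall z, 0 <= z -> D z <> 0 -> x0 <= z).
  { intros z hz hDz. apply hlub. intros y hy. apply hy; auto. }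
  assert (hD0 : D x0 <> 0).
  { intros h0. destruct (hrc x0 hx0) as [d [hd hdc]].
    assert (x0 + d <= x0); [|lra].
    apply hub. intros z hz hDz. destruct (Rlt_or_le z (x0 + d)) as [hlt|]; auto.
    exfalso. apply hDz. assert (x0 <= z) by (apply hle; auto). rewrite (hdc z); [exact h0|lra]. }
  set (c := D x0).
  destruct (hrc x0 hx0) as [d [hd hdc]].
  assert (hc : 0 < Rabs c) by (apply Rabs_pos_lt; exact hD0).
  assert (hC : 0 < C).
  { assert (h := hexp x0 hx0). assert (0 < exp (a*x0)) by apply exp_pos.
    destruct (Rle_or_lt C 0); auto. fold c in h. nra. }
  set (K0 := C * exp (a * (x0 + d))).
  assert (hK0 : 0 < K0) by (unfold K0; assert (0 < exp (a*(x0+d))) by apply exp_pos; nra).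
  set (b := Rmax (Rmax (b0 + 1) (2 * Rabs a + 1)) ((4 * K0 / Rabs c + 1) / d)).
  assert (hb1 : b > b0). { unfold b. assert (h1 := Rmax_l (Rmax (b0 + 1) (2 * Rabs a + 1)) ((4 * K0 / Rabs c + 1) / d)).
    assert (h2 := Rmax_l (b0+1) (2 * Rabs a + 1)). lra. }
  assert (hb2 : b > 2 * Rabs a). { unfold b. assert (h1 := Rmax_l (Rmax (b0 + 1) (2 * Rabs a + 1)) ((4 * K0 / Rabs c + 1) / d)).
    assert (h2 := Rmax_r (b0+1) (2 * Rabs a + 1)). lra. }
  assert (hb3 : b * d > 4 * K0 / Rabs c).
  { assert (h1 := Rmax_r (Rmax (b0 + 1) (2 * Rabs a + 1)) ((4 * K0 / Rabs c + 1) / d)).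
    fold b in h1. assert (b * d >= (4 * K0 / Rabs c + 1) / d * d) by (apply Rmult_ge_compat_r; lra).
    replace ((4 * K0 / Rabs c + 1) / d * d) with (4 * K0 / Rabs c + 1) in H by (field; lra). lra. }
  assert (hapos : Rabs a >= a) by (apply Rle_ge, RRle_abs).
  assert (hapos2 : 0 <= Rabs a) by apply Rabs_pos.
  assert (hbpos : b > 0) by lra.
  destruct (hL b hb1) as [hint hlim].
  set (E1 := exp (-b * x0)). set (u := exp (-b * d)).
  assert (hE1 : 0 < E1) by apply exp_pos. assert (hu : 0 < u) by apply exp_pos.
  assert (hE2 : exp (-b * (x0 + d)) = E1 * u).
  { unfold E1, u. rewrite <- exp_plus. f_equal. ring. }
  set (eps := Rabs c * (E1 - E1 * u) / (2 * b)).
  assert (hu1 : u < 1). { unfold u. rewrite <- exp_0. apply exp_increasing. nra. }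
  assert (heps : eps > 0).
  { unfold eps. apply Rdiv_lt_0_compat; [|lra]. apply Rmult_lt_0_compat; auto. nra. }
  destruct (hlim eps heps) as [M hM].
  set (T := Rmax M (x0 + d)).
  assert (hT1 : T >= M) by (apply Rle_ge, Rmax_l).
  assert (hT2 : x0 + d <= T) by apply Rmax_r.
  set (g := fun x => exp (-b*x) * D x).
  assert (hgT : ex_RInt g 0 T) by (apply hint; lra).
  assert (hg1 : ex_RInt g 0 (x0 + d)) by (apply (ex_RInt_Chasles_1 g 0 (x0+d) T); [lra|exact hgT]).
  assert (hg2 : ex_RInt g (x0+d) T) by (apply (ex_RInt_Chasles_2 g 0 (x0+d) T); [lra|exact hgT]).
  assert (hg3 : ex_RInt g 0 x0) by (apply (ex_RInt_Chasles_1 g 0 x0 (x0+d)); [lra|exact hg1]).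
  assert (hg4 : ex_RInt g x0 (x0+d)) by (apply (ex_RInt_Chasles_2 g 0 x0 (x0+d)); [lra|exact hg1]).
  assert (hsplit : RInt g 0 T = RInt g 0 x0 + RInt g x0 (x0+d) + RInt g (x0+d) T).
  { rewrite <- (RInt_Chasles g 0 (x0+d) T hg1 hg2).
    rewrite <- (RInt_Chasles g 0 x0 (x0+d) hg3 hg4). reflexivity. }
  assert (hz : RInt g 0 x0 = 0).
  { apply RInt_zero_ext. intros y hy. rewrite Rmin_left in hy by lra. rewrite Rmax_right in hy by lra.
    unfold g. destruct (Req_dec (D y) 0) as [h|h]. rewrite h; ring.
    exfalso. assert (x0 <= y) by (apply hle; auto; lra). lra. }
  assert (hmid : RInt g x0 (x0+d) = c * ((E1 - E1 * u)/b)).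
  { rewrite (RInt_ext g (fun y => c * exp (-b*y))).
    2:{ intros y hy. rewrite Rmin_left in hy by lra. rewrite Rmax_right in hy by lra.
        unfold g. rewrite (hdc y) by lra. fold c. apply Rmult_comm. }
    apply is_RInt_unique. rewrite <- hE2.
    apply (is_RInt_scal (fun y => exp (-b*y)) x0 (x0+d) c). apply exp_int. lra. }
  assert (htail : Rabs (RInt g (x0+d) T) <= C * exp (-(b-a)*(x0+d)) / (b - a)).
  { apply tail_bound; auto; try lra. intros y hy. unfold g.
    rewrite Rabs_mult. rewrite (Rabs_right (exp _)) by (left; apply exp_pos).
    assert (h := hexp y ltac:(lra)). assert (0 < exp (-b*y)) by apply exp_pos.
    replace (C * exp (- (b - a) * y)) with (exp (-b*y) * (C * exp (a*y))).
    2:{ replace (exp (- (b - a) * y)) with (exp (-b*y) * exp (a*y)) by (rewrite <- exp_plus; f_equal; ring). ring. }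
    apply Rmult_le_compat_l; lra. }
  assert (hK : C * exp (-(b-a)*(x0+d)) = K0 * (E1 * u)).
  { unfold K0. rewrite <- hE2. replace (exp (- (b - a) * (x0 + d))) with (exp (a*(x0+d)) * exp (-b*(x0+d))) by (rewrite <- exp_plus; f_equal; ring). ring. }
  rewrite hK in htail.
  assert (hMT := hM T hT1). fold g in hMT. rewrite hsplit, hz, hmid in hMT.
  assert (hab : b - a >= b / 2) by lra.
  assert (ht2 : K0 * (E1 * u) / (b - a) <= 2 * K0 * (E1 * u) / b).
  { unfold Rdiv. apply Rle_trans with (K0 * (E1*u) * / (b/2)).
    - apply Rmult_le_compat_l. assert (0 < E1*u) by nra. nra.
      apply Rinv_le_contravar; lra.
    - right. field. lra. }
  assert (hmidabs : Rabs (c * ((E1 - E1 * u) / b)) = 2 * eps).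
  { unfold eps. rewrite Rabs_mult. rewrite (Rabs_right ((E1 - E1*u)/b)).
    field; lra. apply Rle_ge. apply Rdiv_le_0_compat; nra. }
  assert (hrev : Rabs (c * ((E1 - E1 * u) / b)) <= Rabs (0 + c * ((E1 - E1 * u) / b) + RInt g (x0 + d) T) + Rabs (RInt g (x0 + d) T)).
  { replace (c * ((E1 - E1 * u) / b)) with ((0 + c * ((E1 - E1 * u) / b) + RInt g (x0 + d) T) + - RInt g (x0 + d) T) at 1 by ring.
    rewrite <- (Rabs_Ropp (RInt g (x0 + d) T)). apply Rabs_triang. }
  assert (hkey : eps < 2 * K0 * (E1 * u) / b) by lra.
  unfold eps in hkey.
  assert (hkey2 : Rabs c * (1 - u) < 4 * K0 * u).
  { assert (h : Rabs c * (E1 - E1 * u) < 4 * K0 * (E1 * u)).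
    { apply (Rmult_lt_compat_r (2*b)) in hkey; [|lra].
      replace (Rabs c * (E1 - E1 * u) / (2 * b) * (2 * b)) with (Rabs c * (E1 - E1 * u)) in hkey by (field; lra).
      replace (2 * K0 * (E1 * u) / b * (2 * b)) with (4 * K0 * (E1 * u)) in hkey by (field; lra). exact hkey. }
    nra. }
  assert (hexpbd : exp (b * d) * u = 1).
  { unfold u. rewrite <- exp_plus. replace (b*d + -b*d) with 0 by ring. apply exp_0. }
  assert (hexpge : exp (b * d) >= 1 + b * d).
  { destruct (Req_dec (b*d) 0) as [h|h]. rewrite h, exp_0. lra. left. apply exp_ineq1. exact h. }
  assert (h4 : Rabs c * (exp (b*d) - 1) < 4 * K0).
  { assert (h5 := Rmult_lt_compat_r (exp (b*d)) _ _ (exp_pos (b*d)) hkey2). nra. }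
  assert (h6 : Rabs c * (b * d) > 4 * K0).
  { apply (Rmult_gt_compat_l (Rabs c)) in hb3; auto.
    replace (Rabs c * (4 * K0 / Rabs c)) with (4*K0) in hb3 by (field; lra). lra. }
  nra.
Qed.

Definition fl (x : R) : nat := Z.to_nat (up x - 1).

Lemma fl_spec (x : R) : 0 <= x -> INR (fl x) <= x < INR (fl x) + 1.
Proof.
  intros hx. destruct (archimed x) as [h1 h2].
  assert (hz : (1 <= up x)%Z).
  { assert (0 < IZR (up x)) by lra. apply lt_IZR in H. lia. }
  unfold fl. rewrite INR_IZR_INZ, Z2Nat.id by lia.
  rewrite minus_IZR. simpl. lra.
Qed.

Lemma fl_unique (x : R) (n : nat) : INR n <= x < INR n + 1 -> fl x = n.
Proof.
  intros h. assert (hx : 0 <= x) by (assert (h0 := pos_INR n); lra).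
  destruct (fl_spec x hx) as [h1 h2].
  assert (a1 : (fl x < S n)%nat) by (apply INR_lt; rewrite S_INR; lra).
  assert (a2 : (n < S (fl x))%nat) by (apply INR_lt; rewrite S_INR; lra).
  lia.
Qed.

Lemma exp_INR (b : R) (i : nat) : exp (-b * INR i) = exp (-b) ^ i.
Proof.
  induction i. simpl. rewrite Rmult_0_r. apply exp_0.
  rewrite S_INR. simpl. rewrite <- IHi. rewrite <- exp_plus. f_equal. ring.
Qed.

Lemma sum_range_S (g : nat -> R) (n : nat) : sum_range g (S n) = sum_range g n + g (S n).
Proof. reflexivity. Qed.

Section STEP.
Variable a : nat -> R.
Variable f : R -> R.
Hypothesis hf : forall x, continuous f x.

Definition sf (x : R) : R := f x * a (fl x).

Lemma piece_ex (i : nat) (u v : R) : INR i <= u <= v -> v <= INR i + 1 -> ex_RInt sf u v.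
Proof.
  intros h1 h2.
  apply (ex_RInt_ext (fun x => f x * a i)).
  { intros x hx. rewrite Rmin_left in hx by lra. rewrite Rmax_right in hx by lra.
    unfold sf. rewrite (fl_unique x i) by lra. reflexivity. }
  apply (ex_RInt_continuous (V:=R_CompleteNormedModule)). intros z _.
  apply (continuous_mult f (fun _ => a i)). apply hf. apply continuous_const.
Qed.

Lemma piece_val (i : nat) (u v : R) : INR i <= u <= v -> v <= INR i + 1 ->
  RInt sf u v = a i * RInt f u v.
Proof.
  intros h1 h2.
  apply is_RInt_unique.
  apply (is_RInt_ext (fun x => scal (a i) (f x))).
  2:{ apply (is_RInt_scal (V:=R_NormedModule)). apply (RInt_correct (V:=R_CompleteNormedModule)).
      apply (ex_RInt_continuous (V:=R_CompleteNormedModule)). intros; apply hf. }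
  intros x hx. rewrite Rmin_left in hx by lra. rewrite Rmax_right in hx by lra.
  unfold sf. rewrite (fl_unique x i) by lra. unfold scal; simpl. unfold mult; simpl. ring.
Qed.

Lemma int_nat (n : nat) : ex_RInt sf 0 (INR n) /\ RInt sf 0 (INR n) = sum_range (fun k => a (k - 1)%nat * RInt f (INR (k - 1)) (INR k)) n.
Proof.
  induction n.
  - split. simpl. apply (ex_RInt_point (V:=R_CompleteNormedModule)). simpl. apply (RInt_point (V:=R_CompleteNormedModule)).
  - destruct IHn as [he hv].
    assert (hp : ex_RInt sf (INR n) (INR (S n))) by (apply (piece_ex n); rewrite S_INR; lra).
    split. apply (ex_RInt_Chasles _ _ _ _ he hp).
    rewrite <- (RInt_Chasles _ _ _ _ he hp). rewrite hv. rewrite sum_range_S. cbv beta.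
    replace (S n - 1)%nat with n by lia.
    rewrite (piece_val n) by (rewrite S_INR; lra). reflexivity.
Qed.

Lemma int_real (T : R) : 0 <= T -> ex_RInt sf 0 T /\ RInt sf 0 T = RInt sf 0 (INR (fl T)) + a (fl T) * RInt f (INR (fl T)) T.
Proof.
  intros hT. destruct (fl_spec T hT) as [h1 h2]. destruct (int_nat (fl T)) as [he hv].
  assert (hp : ex_RInt sf (INR (fl T)) T) by (apply (piece_ex (fl T)); lra).
  split. apply (ex_RInt_Chasles _ _ _ _ he hp).
  rewrite <- (RInt_Chasles _ _ _ _ he hp). rewrite (piece_val (fl T) (INR (fl T)) T) by lra. reflexivity.
Qed.

End STEP.

Lemma sum_range_f_R0 (g : nat -> R) (m : nat) :
  sum_range (fun k => g (k - 1)%nat) (S m) = sum_f_R0 g m.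
Proof.
  induction m. simpl. ring.
  rewrite sum_range_S, IHm. simpl. replace (m - 0)%nat with m by lia. reflexivity.
Qed.

Lemma exp_cont (b : R) : forall x, continuous (fun x => exp (-b*x)) x.
Proof. intros x. exact (ex_derive_continuous (fun x => exp (-b*x)) x ltac:(auto_derive; auto)). Qed.

Lemma step_laplace (a : nat -> R) (b G : R) : b > 0 -> (forall n, 0 <= a n) ->
  infinite_sum (fun i => a i * exp (-b) ^ i) G ->
  (forall T, 0 <= T -> ex_RInt (fun x => exp (-b*x) * a (fl x)) 0 T) /\
  forall eps, eps > 0 -> exists M, forall T, T >= M ->
    Rabs (RInt (fun x => exp (-b*x) * a (fl x)) 0 T - (1 - exp (-b)) / b * G) < eps.
Proof.
  intros hb ha hG.
  set (f := fun x => exp (-b*x)). set (s := exp (-b)).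
  assert (hs0 : 0 < s) by apply exp_pos.
  assert (hs1 : s < 1) by (unfold s; rewrite <- exp_0; apply exp_increasing; lra).
  assert (hf := exp_cont b).
  change (fun x => exp (-b*x) * a (fl x)) with (sf a f).
  split. { intros T hT. exact (proj1 (int_real a f hf T hT)). }
  assert (hpiece : forall u v, RInt f u v = (exp (-b*u) - exp (-b*v))/b).
  { intros u v. apply is_RInt_unique. apply exp_int. lra. }
  assert (hnat : forall m, RInt (sf a f) 0 (INR (S m)) = (1 - s)/b * sum_f_R0 (fun i => a i * s ^ i) m).
  { intros m. rewrite (proj2 (int_nat a f hf (S m))).
    rewrite (sum_range_ext_in _ (fun k => (1 - s)/b * (a (k - 1)%nat * s ^ (k - 1)))).
    2:{ intros k hk. rewrite hpiece. rewrite !exp_INR. fold s.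
        replace k with (S (k - 1)) at 3 by lia. simpl. field. lra. }
    clear. induction m. simpl. ring. rewrite sum_range_S, IHm. simpl. replace (m - 0)%nat with m by lia. ring. }
  intros eps heps.
  set (e' := eps * b / 3). assert (he' : e' > 0) by (unfold e'; apply Rdiv_lt_0_compat; nra).
  destruct (hG e' he') as [N hN].
  exists (INR N + 2). intros T hT.
  assert (hT0 : 0 <= T) by (assert (h := pos_INR N); lra).
  destruct (fl_spec T hT0) as [hf1 hf2].
  assert (hn : (N < fl T)%nat) by (apply INR_lt; lra).
  rewrite (proj2 (int_real a f hf T hT0)).
  destruct (fl T) as [|m] eqn:hm. lia.
  rewrite hnat, hpiece, exp_INR. fold s.
  assert (h1 := hN m ltac:(lia)). assert (h2 := hN (S m) ltac:(lia)).
  unfold R_dist in h1, h2. rewrite tech5 in h2.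
  apply Rabs_def2 in h1. apply Rabs_def2 in h2. fold s in h1, h2.
  assert (heT : 0 < exp (-b*T)) by apply exp_pos.
  assert (heT2 : exp (-b*T) <= s ^ (S m)).
  { unfold s. rewrite <- exp_INR. destruct (Req_dec T (INR (S m))) as [e|e]. rewrite e. lra.
    left. apply exp_increasing. assert (T > INR (S m)) by lra. nra. }
  assert (ham := ha (S m)).
  set (Sm := sum_f_R0 (fun i => a i * s ^ i) m) in *.
  assert (hk : 0 < (1 - s)/b < 1/b).
  { split. apply Rdiv_lt_0_compat; lra. unfold Rdiv. apply Rmult_lt_compat_r. apply Rinv_0_lt_compat; lra. lra. }
  set (r := a (S m) * ((s ^ S m - exp (- b * T)) / b)).
  assert (hr0 : 0 <= r).
  { unfold r. apply Rmult_le_pos; auto. apply Rdiv_le_0_compat; lra. }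
  assert (hr1 : r <= (a (S m) * s ^ S m) / b).
  { unfold r. unfold Rdiv. rewrite <- Rmult_assoc. rewrite Rmult_minus_distr_l.
    apply Rmult_le_compat_r. left; apply Rinv_0_lt_compat; lra.
    assert (0 <= a (S m) * exp (-b*T)) by (apply Rmult_le_pos; lra). lra. }
  assert (hr2 : (a (S m) * s ^ S m) / b < 2 * e' / b).
  { unfold Rdiv. apply Rmult_lt_compat_r. apply Rinv_0_lt_compat; lra. lra. }
  assert (he'b : 3 * e' / b = eps) by (unfold e'; field; lra).
  assert (hk2 : Rabs ((1 - s) / b * (Sm - G)) <= (1 - s)/b * e').
  { rewrite Rabs_mult, Rabs_right by lra. apply Rmult_le_compat_l. lra.
    apply Rabs_le. lra. }
  assert (hk3 : (1 - s)/b * e' <= e' / b).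
  { apply Rle_trans with (1/b * e'). apply Rmult_le_compat_r; lra. right; field; lra. }
  replace ((1 - s) / b * Sm + r - (1 - s) / b * G) with ((1 - s) / b * (Sm - G) + r) by ring.
  apply Rle_lt_trans with (Rabs ((1 - s) / b * (Sm - G)) + Rabs r). apply Rabs_triang.
  rewrite (Rabs_right r) by lra.
  assert (e' / b + 2 * e' / b = 3 * e' / b) by (field; lra). lra.
Qed.

Lemma Rsum_is (u : nat -> R) (l : R) : is_series u l -> Rsum u = l.
Proof.
  intros h. apply is_series_Reals in h. unfold Rsum.
  assert (h2 := epsilon_spec (inhabits 0) (fun l => infinite_sum u l) (ex_intro _ l h)).
  eapply uniqueness_sum; eauto.
Qed.

Lemma Series_zero : Series (fun _ => 0) = 0.
Proof.
  apply is_series_unique. apply is_series_Reals. intros eps he. exists 0%nat. intros n _.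
  unfold R_dist. replace (sum_f_R0 (fun _ => 0) n) with 0. rewrite Rminus_diag, Rabs_R0. lra.
  induction n; simpl; [ring| rewrite <- IHn; ring].
Qed.

Lemma Series_nonneg (a : nat -> R) : (forall n, 0 <= a n) -> ex_series a -> 0 <= Series a.
Proof.
  intros h he. rewrite <- Series_zero. apply Series_le; auto. intros; split; [lra|auto].
Qed.

Section LEVY.
Variable nu : Z -> R.
Hypothesis hnu : skip_free_levy nu.

Definition A (j : nat) : R := nu (- (Z.of_nat j + 1))%Z.
Definition nu1 : R := nu 1%Z.

Lemma A_nonneg (j : nat) : 0 <= A j.
Proof. destruct hnu as [h _]. apply h. Qed.

Lemma nu1_pos : 0 < nu1.
Proof. destruct hnu as [_ [_ [_ [h _]]]]. exact h. Qed.

Lemma A_ex : ex_series A.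
Proof. destruct hnu as [_ [_ [_ [_ [s hs]]]]]. exists s. apply is_series_Reals. exact hs. Qed.

Definition Lam : R := Series A.

Lemma A_shift_ex (m : nat) : ex_series (fun j => A (m + j)%nat).
Proof. apply (ex_series_incr_n A m). apply A_ex. Qed.

Lemma tail_eq (m : nat) : nu_tail nu (S m) = Series (fun j => A (m + j)%nat).
Proof.
  unfold nu_tail. apply Rsum_is.
  apply (is_series_ext (fun j => A (m + j)%nat)).
  { intros j. unfold A. f_equal. lia. }
  apply Series_correct. apply A_shift_ex.
Qed.

Lemma tail_nonneg (k : nat) : (1 <= k)%nat -> 0 <= nu_tail nu k.
Proof.
  intros hk. destruct k. lia. rewrite tail_eq. apply Series_nonneg.
  intros; apply A_nonneg. apply A_shift_ex.
Qed.

Lemma tail_rec (m : nat) : nu_tail nu (S m) = A m + nu_tail nu (S (S m)).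
Proof.
  rewrite !tail_eq. rewrite Series_incr_1 by apply A_shift_ex.
  rewrite Nat.add_0_r. f_equal. apply Series_ext. intros j. f_equal. lia.
Qed.

Lemma tail_1 : nu_tail nu 1%nat = Lam.
Proof. rewrite tail_eq. unfold Lam. apply Series_ext. intros; reflexivity. Qed.

Variable q : R.
Hypothesis hq : 0 <= q.

Definition cc (k : nat) : R := (q + nu_tail nu k) / nu1.
Definition ww0 : R := 1 / nu1.

Lemma cc_nonneg (k : nat) : (1 <= k)%nat -> 0 <= cc k.
Proof.
  intros hk. unfold cc. apply Rdiv_le_0_compat. assert (h := tail_nonneg k hk). lra. apply nu1_pos.
Qed.

Lemma cc_dec (k : nat) : (1 <= k)%nat -> cc (S k) <= cc k.
Proof.
  intros hk. destruct k. lia. unfold cc. rewrite (tail_rec k).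
  unfold Rdiv. apply Rmult_le_compat_r. left; apply Rinv_0_lt_compat, nu1_pos.
  assert (h := A_nonneg k). lra.
Qed.

Lemma ww0_nonneg : 0 <= ww0.
Proof. unfold ww0. apply Rdiv_le_0_compat. lra. apply nu1_pos. Qed.

End LEVY.

Lemma is_series_cons (a : nat -> R) (l : R) :
  is_series (fun k => a (S k)) (l - a 0%nat) -> is_series a l.
Proof. intros h. apply is_series_decr_1. exact h. Qed.

Lemma is_series_eq (a : nat -> R) (l l' : R) : is_series a l -> l = l' -> is_series a l'.
Proof. intros h e; subst; exact h. Qed.

Section LEVY2.
Variable nu : Z -> R.
Hypothesis hnu : skip_free_levy nu.
Variable q : R.
Hypothesis hq : 0 <= q.

Definition pa (n : nat) : R := match n with O => 0 | S j => A nu j end.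

Lemma pa_series (s : R) : 0 <= s <= 1 ->
  is_series (fun j => A nu j * s ^ (S j)) (PSeries pa s).
Proof.
  intros hs.
  assert (hex : ex_series (fun n => pa n * s ^ n)).
  { apply (ex_series_le (K:=R_AbsRing) (V:=R_CompleteNormedModule) _ pa).
    - intros n. change (norm (pa n * s ^ n)) with (Rabs (pa n * s ^ n)).
      rewrite Rabs_mult. assert (0 <= pa n) by (destruct n; simpl; [lra|apply A_nonneg; auto]).
      rewrite Rabs_right by lra. rewrite Rabs_right by (apply Rle_ge, pow_le; lra).
      assert (s ^ n <= 1) by (rewrite <- (pow1 n); apply pow_incr; lra).
      rewrite <- (Rmult_1_r (pa n)) at 2. apply Rmult_le_compat_l; lra.
    - apply ex_series_incr_1. apply (ex_series_ext (A nu)). intros; reflexivity. apply A_ex; auto. }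
  unfold PSeries. rewrite (Series_incr_1 _ hex).
  eapply is_series_eq. apply Series_correct. apply (proj1 (ex_series_incr_1 _) hex).
  simpl. ring.
Qed.


Lemma lap_eq (b : R) : 0 <= b ->
  laplace_exp nu b = nu1 nu * (exp b - 1) + PSeries pa (exp (-b)) - Lam nu.
Proof.
  intros hb. unfold laplace_exp. fold (nu1 nu).
  assert (hs : 0 <= exp (-b) <= 1).
  { split. left; apply exp_pos. rewrite <- exp_0. destruct (Req_dec b 0) as [e|e].
    rewrite e, Ropp_0. lra. left. apply exp_increasing. lra. }
  rewrite (Rsum_is _ (PSeries pa (exp (-b)) - Lam nu)). ring.
  assert (h1 := pa_series _ hs).
  assert (h2 := Series_correct _ (A_ex nu hnu)). fold (Lam nu) in h2.
  assert (h3 := is_series_minus _ _ _ _ h1 h2).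
  refine (is_series_ext _ _ _ _ h3).
  intros n. simpl. unfold plus, opp; simpl. unfold A.
  replace (exp (- (INR n + 1) * b)) with (exp (-b) * exp (-b)^n) by (rewrite <- (exp_INR b n), <- exp_plus; f_equal; ring). change (A nu n * (exp (-b) * exp (-b)^n) + - A nu n = A nu n * (exp (-b) * exp (-b)^n - 1)). ring.
Qed.

Lemma pco_series (b : R) : b > 0 ->
  nu1 nu * exp b * PSeries (pco (cc nu q)) (exp (-b)) = laplace_exp nu b - q.
Proof.
  intros hb. set (s := exp (-b)).
  assert (hs : 0 <= s <= 1).
  { split. left; apply exp_pos. unfold s. rewrite <- exp_0. left. apply exp_increasing. lra. }
  assert (hn1 := nu1_pos nu hnu).
  assert (hser : is_series (fun n => pco (cc nu q) n * s ^ n)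
     (1 - (1 + cc nu q 1) * s + s / nu1 nu * PSeries pa s)).
  { apply is_series_cons. apply is_series_cons.
    eapply is_series_eq.
    - apply (is_series_ext (fun k => scal (s / nu1 nu) (A nu k * s ^ (S k)))).
      + intros k. simpl pco. unfold cc. rewrite (tail_rec nu hnu k).
        unfold scal; simpl; unfold mult; simpl. field. lra.
      + apply (is_series_scal (K:=R_AbsRing) (V:=R_NormedModule) (s / nu1 nu) (fun k => A nu k * s ^ S k)). apply pa_series. exact hs.
    - simpl. unfold scal; simpl; unfold mult; simpl. ring. }
  rewrite (is_pseries_unique _ _ _ (proj2 (is_pseries_R _ _ _) hser)).
  rewrite (lap_eq b) by lra. fold s.
  assert (hbs : exp b * s = 1) by (unfold s; rewrite <- exp_plus; rewrite Rplus_opp_r; apply exp_0).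
  unfold cc. rewrite tail_1 by auto.
  replace (nu1 nu * exp b * (1 - (1 + (q + Lam nu) / nu1 nu) * s + s / nu1 nu * PSeries pa s))
    with (nu1 nu * exp b - (nu1 nu + q + Lam nu) * (exp b * s) + (exp b * s) * PSeries pa s) by (field; lra).
  rewrite hbs. ring.
Qed.

End LEVY2.

Lemma cont_of_derive (f : R -> R) (x : R) : ex_derive f x -> continuity_pt f x.
Proof. intros h. apply continuity_pt_filterlim. exact (ex_derive_continuous f x h). Qed.

Section PHI.
Variable nu : Z -> R.
Hypothesis hnu : skip_free_levy nu.
Variable q : R.
Hypothesis hq : 0 <= q.

Definition phi' (b : R) : R := nu1 nu * (exp b - 1) + PSeries (pa nu) (exp (-b)) - Lam nu.

Lemma A_le_Lam (j : nat) : A nu j <= Lam nu.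
Proof.
  unfold Lam. rewrite (Series_incr_n (A nu) (S j)) by (lia || apply A_ex; auto).
  simpl pred.
  assert (0 <= Series (fun k => A nu (S j + k)%nat)).
  { apply Series_nonneg. intros; apply A_nonneg; auto. apply (ex_series_incr_n (A nu) (S j)). apply A_ex; auto. }
  destruct j. change (sum_f_R0 (A nu) 0) with (A nu 0). lra. rewrite tech5.
  assert (0 <= sum_f_R0 (A nu) j) by (apply cond_pos_sum; intros; apply A_nonneg; auto). lra.
Qed.

Lemma phi'_cont (b : R) : 0 < b -> continuity_pt phi' b.
Proof.
  intros hb.
  apply (continuity_pt_ext (fun b => (fun b => nu1 nu * (exp b - 1)) b + comp (PSeries (pa nu)) (fun b => exp (-b)) b + (fun _ => - Lam nu) b)).
  { intros x. unfold phi', comp. ring. }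
  apply continuity_pt_plus. apply continuity_pt_plus.
  - apply cont_of_derive. auto_derive. auto.
  - apply continuity_pt_comp. apply cont_of_derive. auto_derive. auto.
    apply PSeries_continuity. apply (radius_ge _ 1 (Lam nu)).
    + intros n. rewrite pow1, Rmult_1_r. destruct n; simpl.
      rewrite Rabs_R0. apply Series_nonneg. intros; apply A_nonneg; auto. apply A_ex; auto.
      rewrite Rabs_right by (apply Rle_ge, A_nonneg; auto). apply A_le_Lam.
    + rewrite Rabs_right by (left; apply exp_pos). rewrite <- exp_0. apply exp_increasing. lra.
  - apply continuity_pt_const. intros x y. reflexivity.
Qed.

Lemma phi'_eq (b : R) : 0 <= b -> laplace_exp nu b = phi' b.
Proof. intros hb. rewrite (lap_eq nu hnu b hb). reflexivity. Qed.

Lemma phi'_bounds (b : R) : 0 <= b ->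
  nu1 nu * (exp b - 1) - Lam nu <= phi' b <= nu1 nu * (exp b - 1).
Proof.
  intros hb. unfold phi'.
  assert (hs : 0 <= exp (-b) <= 1).
  { split. left; apply exp_pos. rewrite <- exp_0. destruct (Req_dec b 0) as [e|e].
    rewrite e, Ropp_0. lra. left. apply exp_increasing. lra. }
  assert (h1 := pa_series nu hnu _ hs).
  rewrite <- (is_series_unique _ _ h1).
  split.
  - assert (0 <= Series (fun j => A nu j * exp (-b) ^ S j)); [|lra].
    apply Series_nonneg. intros; apply Rmult_le_pos. apply A_nonneg; auto. apply pow_le; lra.
    exists (PSeries (pa nu) (exp (-b))). exact h1.
  - assert (Series (fun j => A nu j * exp (-b) ^ S j) <= Lam nu); [|lra].
    apply Series_le. intros n. split. apply Rmult_le_pos. apply A_nonneg; auto. apply pow_le; lra.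
    rewrite <- (Rmult_1_r (A nu n)) at 2. apply Rmult_le_compat_l. apply A_nonneg; auto.
    rewrite <- (pow1 (S n)); apply pow_incr; lra.
    apply A_ex; auto.
Qed.

End PHI.

Section PHI2.
Variable nu : Z -> R.
Hypothesis hnu : skip_free_levy nu.
Variable q : R.
Hypothesis hq : 0 <= q.

Lemma phi'_0 : phi' nu 0 = 0.
Proof.
  unfold phi'. rewrite Ropp_0, exp_0.
  assert (h := pa_series nu hnu 1 ltac:(lra)).
  rewrite <- (is_series_unique _ _ h).
  rewrite (Series_ext _ (A nu)) by (intros; rewrite pow1; ring). unfold Lam. ring.
Qed.

Lemma Phi_exists : exists p, is_Phi nu q p.
Proof.
  assert (hn1 := nu1_pos nu hnu).
  assert (hL : 0 <= Lam nu) by (apply Series_nonneg; [intros; apply A_nonneg; auto|apply A_ex; auto]).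
  set (B := 1 + (q + Lam nu) / nu1 nu).
  assert (hB0 : 1 <= B) by (unfold B; assert (0 <= (q + Lam nu)/nu1 nu) by (apply Rdiv_le_0_compat; lra); lra).
  assert (hbig : forall b, B <= b -> phi' nu b > q).
  { intros b hb. assert (h := phi'_bounds nu hnu b ltac:(lra)).
    assert (he : exp b >= 1 + b) by (destruct (Req_dec b 0); [subst; rewrite exp_0; lra| left; apply exp_ineq1; auto]).
    assert (nu1 nu * b >= nu1 nu * B) by (apply Rle_ge, Rmult_le_compat_l; lra).
    assert (nu1 nu * B = nu1 nu + q + Lam nu) by (unfold B; field; lra).
    assert (nu1 nu * (exp b - 1) >= nu1 nu * b) by (apply Rle_ge, Rmult_le_compat_l; lra).
    lra. }
  set (R0 := fun b => 0 <= b /\ laplace_exp nu b = q).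
  assert (hne : exists b, R0 b).
  { destruct (Req_dec q 0) as [e|e].
    - exists 0. split. lra. rewrite phi'_eq by (auto; lra). rewrite phi'_0. auto.
    - set (eps := ln (1 + q / (2 * nu1 nu))).
      assert (hq2 : 0 < q / (2 * nu1 nu)) by (apply Rdiv_lt_0_compat; lra).
      assert (heps0 : 0 < eps) by (unfold eps; rewrite <- ln_1; apply ln_increasing; lra).
      assert (hexp : exp eps = 1 + q / (2 * nu1 nu)) by (unfold eps; apply exp_ln; lra).
      assert (hphie : phi' nu eps < q).
      { assert (h := phi'_bounds nu hnu eps ltac:(lra)). rewrite hexp in h.
        assert (nu1 nu * (1 + q / (2 * nu1 nu) - 1) = q / 2) by (field; lra). lra. }
      assert (heB : eps < B).
      { destruct (Rlt_or_le eps B); auto. assert (h := hbig eps H). lra. }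
      destruct (Ranalysis5.IVT_interv (fun b => phi' nu b - q) eps B) as [z [hz1 hz2]].
      + intros a ha. apply continuity_pt_minus. apply phi'_cont; auto; lra.
        apply continuity_pt_const. intros x y; reflexivity.
      + exact heB.
      + lra.
      + assert (h := hbig B (Rle_refl B)). lra.
      + exists z. split. lra. rewrite phi'_eq by (auto; lra). lra. }
  destruct (completeness R0) as [p [hub hlub]].
  { exists B. intros b [hb0 hb]. destruct (Rlt_or_le b B) as [|h]; [lra|].
    rewrite phi'_eq in hb by (auto; lra). assert (h2 := hbig b h). lra. }
  { exact hne. }
  destruct hne as [b0 hb0].
  assert (hp0 : 0 <= p) by (assert (h := hub b0 hb0); destruct hb0; lra).
  exists p. split; [exact hp0|]. split.
  - rewrite phi'_eq by (auto; lra).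
    destruct (Req_dec (phi' nu p) q) as [e|hne]; auto. exfalso.
    destruct (Req_dec p 0) as [e0|hp].
    { destruct hb0 as [h1 h2]. assert (b0 <= p) by (apply hub; split; auto).
      assert (hb00 : b0 = 0) by lra. rewrite hb00 in h2. rewrite (phi'_eq nu hnu 0 (Rle_refl 0)) in h2. rewrite e0 in hne. contradiction. }
    assert (hpp : 0 < p) by lra.
    assert (hc := phi'_cont nu hnu p hpp).
    unfold continuity_pt, continue_in, limit1_in, limit_in in hc. simpl in hc.
    destruct (hc (Rabs (phi' nu p - q)) ltac:(apply Rabs_pos_lt; lra)) as [del [hdel hcl]].
    set (d := Rmin (del / 2) (p / 2)).
    assert (hd : 0 < d) by (unfold d; apply Rmin_glb_lt; lra).
    assert (hd1 : d <= del / 2) by apply Rmin_l. assert (hd2 : d <= p / 2) by apply Rmin_r.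
    assert (p <= p - d); [|lra].
    apply hlub. intros b [hb1 hb2].
    assert (hbp : b <= p) by (apply hub; split; auto).
    destruct (Rle_or_lt b (p - d)) as [|hlt]; auto. exfalso.
    destruct (Req_dec b p) as [ebp|nbp].
    { subst b. rewrite phi'_eq in hb2 by auto. contradiction. }
    assert (h := hcl b). rewrite phi'_eq in hb2 by auto.
    assert (hh : Rdist (phi' nu b) (phi' nu p) < Rabs (phi' nu p - q)).
    { apply h. split. split; [exact I|auto]. unfold Rdist. rewrite Rabs_left by lra. lra. }
    unfold Rdist in hh. rewrite hb2 in hh. rewrite <- Rabs_Ropp in hh.
    replace (- (q - phi' nu p)) with (phi' nu p - q) in hh by ring. lra.
  - intros b hb hbq. apply hub. split; auto.
Qed.

End PHI2.

Lemma Rint_val (f : R -> R) (a b v : R) : ex_RInt f a b -> RInt f a b = v -> Rint f a b = v.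
Proof.
  intros he hv. set (pr := ex_RInt_Reals_0 _ _ _ he).
  unfold Rint.
  assert (hex : exists v', exists pr : Riemann_integrable f a b, RiemannInt pr = v').
  { exists (RiemannInt pr). exists pr. reflexivity. }
  destruct (epsilon_spec (inhabits 0) (fun v => exists pr : Riemann_integrable f a b, RiemannInt pr = v) hex) as [pr' hpr'].
  rewrite <- hpr'. rewrite (RiemannInt_P5 pr' pr). rewrite <- (RInt_Reals _ _ _ pr). exact hv.
Qed.

Lemma Rfloor_INR (m : nat) : Rfloor (INR m) = INR m.
Proof.
  unfold Rfloor. rewrite <- (tech_up (INR m) (Z.of_nat m + 1)).
  - rewrite Z.add_simpl_r. symmetry. apply INR_IZR_INZ.
  - rewrite plus_IZR, <- INR_IZR_INZ. lra.
  - rewrite plus_IZR, <- INR_IZR_INZ. lra.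
Qed.

Section MAIN.
Variable nu : Z -> R.
Variable q : R.
Variable W : R -> R.
Hypothesis hnu : skip_free_levy nu.
Hypothesis hq : 0 <= q.
Hypothesis hW : is_scale_W nu q W.

Definition c0 := cc nu q.
Definition a0 := ww0 nu.
Definition ws (n : nat) : R := w a0 c0 n.

Lemma hc0 : forall k, (1 <= k)%nat -> 0 <= c0 k.
Proof. intros; apply cc_nonneg; auto. Qed.
Lemma hdec0 : forall k, (1 <= k)%nat -> c0 (S k) <= c0 k.
Proof. intros; apply cc_dec; auto. Qed.
Lemma ha0 : 0 <= a0.
Proof. apply ww0_nonneg; auto. Qed.

Lemma ws_nonneg (n : nat) : 0 <= ws n.
Proof. apply w_nonneg. apply ha0. apply hc0. Qed.

Definition KK := 1 + c0 1%nat.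

Lemma KK_ge1 : 1 <= KK.
Proof. unfold KK. assert (h := hc0 1%nat ltac:(lia)). lra. Qed.

Lemma ws_bound (n : nat) : ws n <= a0 * exp (ln KK * INR n).
Proof.
  assert (h := w_bound a0 c0 ha0 hc0 hdec0 n). fold KK in h. unfold ws.
  replace (exp (ln KK * INR n)) with (KK ^ n). exact h.
  replace (ln KK * INR n) with (- (- ln KK) * INR n) by ring.
  rewrite exp_INR. rewrite Ropp_involutive. rewrite exp_ln. reflexivity. assert (h1 := KK_ge1). lra.
Qed.

Lemma laplace_match (p b : R) : is_Phi nu q p -> b > Rmax p (ln KK) ->
  infinite_sum (fun i => ws i * exp (-b) ^ i) (PSeries ws (exp (-b))) /\
  (1 - exp (-b)) / b * PSeries ws (exp (-b)) = (exp b - 1) / (b * (laplace_exp nu b - q)).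
Proof.
  intros hp hb.
  assert (hbp : b > p) by (assert (h := Rmax_l p (ln KK)); lra).
  assert (hbK : b > ln KK) by (assert (h := Rmax_r p (ln KK)); lra).
  assert (hb0 : b > 0) by (destruct hp as [h _]; lra).
  set (s := exp (-b)).
  assert (hs0 : 0 <= s) by (left; apply exp_pos).
  assert (hK1 := KK_ge1).
  assert (hsK : s * KK < 1).
  { unfold s. rewrite <- (exp_ln KK) by lra. rewrite <- exp_plus. rewrite <- exp_0.
    apply exp_increasing. lra. }
  destruct (gen_series a0 c0 ha0 hc0 hdec0 s hs0 hsK) as [h1 [h2 [h3 h4]]].
  split.
  - apply is_series_Reals. apply is_pseries_R. exact h1.
  - assert (hps := pco_series nu hnu q b hb0). fold s in hps.
    change (PSeries (w a0 c0) s) with (PSeries ws s) in h2.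
    assert (hn1 := nu1_pos nu hnu).
    assert (ha : a0 = 1 / nu1 nu) by reflexivity.
    assert (heb : exp b * s = 1) by (unfold s; rewrite <- exp_plus, Rplus_opp_r; apply exp_0).
    assert (heb0 : 0 < exp b) by apply exp_pos.
    rewrite <- hps.
    set (P := PSeries (pco c0) s) in *. set (G := PSeries ws s) in *.
    assert (hP : P <> 0). { intros e. rewrite e in h2. rewrite ha in h2. assert (0 < 1 / nu1 nu) by (apply Rdiv_lt_0_compat; lra). lra. }
    assert (hG : G = 1 / (nu1 nu * P)). { rewrite ha in h2. replace G with ((P*G)/P) by (field; auto). rewrite h2. field. split; lra. }
    rewrite hG.
    replace (exp b - 1) with (exp b * (1 - s)) by lra.
    change (PSeries (pco (cc nu q)) s) with P. field. repeat split; lra.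
Qed.


Lemma exp_le_mono (x y : R) : x <= y -> exp x <= exp y.
Proof. intros h. destruct (Req_dec x y) as [e|e]. subst; lra. left; apply exp_increasing; lra. Qed.

Lemma W_eq : forall x, 0 <= x -> W x = ws (fl x).
Proof.
  destruct hW as [hneg [hpos [[hrc _] [[C [a hC]] hlap]]]].
  destruct (Phi_exists nu hnu q hq) as [p hp].
  set (b0 := Rmax p (ln KK)).
  set (D := fun x => W x - ws (fl x)).
  assert (hK1 := KK_ge1).
  assert (hlnK : 0 <= ln KK) by (rewrite <- ln_1; destruct (Req_dec KK 1) as [e|e]; [rewrite e; lra| left; apply ln_increasing; lra]).
  intros x hx.
  assert (D x = 0); [| unfold D in H; lra].
  apply (uniq_laplace D (Rabs C + a0) (Rmax a (ln KK)) b0); auto.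
  - intros y hy. destruct (hrc y hy) as [d1 [hd1 hc1]]. destruct (fl_spec y hy) as [hf1 hf2].
    exists (Rmin d1 (INR (fl y) + 1 - y)). split. apply Rmin_glb_lt; lra.
    intros z hz. assert (hm1 := Rmin_l d1 (INR (fl y) + 1 - y)). assert (hm2 := Rmin_r d1 (INR (fl y) + 1 - y)).
    unfold D. rewrite hc1 by lra. rewrite (fl_unique z (fl y)) by lra. reflexivity.
  - intros y hy. unfold D.
    assert (ht : Rabs (W y - ws (fl y)) <= Rabs (W y) + Rabs (ws (fl y))).
    { unfold Rminus. eapply Rle_trans. apply Rabs_triang. rewrite Rabs_Ropp. lra. }
    assert (h1 := hC y hy).
    assert (hea : exp (a * y) <= exp (Rmax a (ln KK) * y)).
    { apply exp_le_mono. apply Rmult_le_compat_r; auto. apply Rmax_l. }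
    assert (heK : exp (ln KK * INR (fl y)) <= exp (Rmax a (ln KK) * y)).
    { apply exp_le_mono. destruct (fl_spec y hy). apply Rmult_le_compat; [exact hlnK | apply pos_INR | apply Rmax_r | lra]. }
    assert (h2 := ws_bound (fl y)). assert (h3 := ws_nonneg (fl y)).
    rewrite (Rabs_right (ws (fl y))) in ht by lra.
    assert (hC0 : C * exp (a * y) <= Rabs C * exp (Rmax a (ln KK) * y)).
    { apply Rle_trans with (Rabs C * exp (a * y)). apply Rmult_le_compat_r. left; apply exp_pos. apply RRle_abs.
      apply Rmult_le_compat_l. apply Rabs_pos. exact hea. }
    assert (a0 * exp (ln KK * INR (fl y)) <= a0 * exp (Rmax a (ln KK) * y)) by (apply Rmult_le_compat_l; auto; apply ha0).
    lra.
  - intros b hb. destruct (laplace_match p b hp hb) as [hinf heq].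
    assert (hbp : b > p) by (assert (h := Rmax_l p (ln KK)); unfold b0 in hb; lra).
    assert (hb0 : b > 0) by (destruct hp as [h _]; lra).
    destruct (hlap p hp b hbp) as [hint hlim].
    destruct (step_laplace ws b _ hb0 ws_nonneg hinf) as [sint slim].
    assert (hext : forall T, 0 <= T -> ex_RInt (fun x => exp (-b*x) * W x) 0 T).
    { intros T hT. destruct (hint T hT) as [pr]. apply ex_RInt_Reals_1; exact pr. }
    assert (hdiff : forall T, 0 <= T -> ex_RInt (fun x => exp (-b*x) * D x) 0 T /\
       RInt (fun x => exp (-b*x) * D x) 0 T = RInt (fun x => exp (-b*x) * W x) 0 T - RInt (fun x => exp (-b*x) * ws (fl x)) 0 T).
    { intros T hT. assert (e1 := hext T hT). assert (e2 := sint T hT).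
      assert (e3 := ex_RInt_minus (V:=R_NormedModule) _ _ _ _ e1 e2).
      split.
      - apply (ex_RInt_ext (V:=R_NormedModule) (fun y => minus (exp (-b*y) * W y) (exp (-b*y) * ws (fl y)))).
        intros y _. unfold D. symmetry. apply Rmult_minus_distr_l. exact e3.
      - rewrite (RInt_ext _ (fun y => minus (exp (-b*y) * W y) (exp (-b*y) * ws (fl y)))).
        rewrite (RInt_minus (V:=R_CompleteNormedModule)) by auto. reflexivity.
        intros y _. unfold D. apply Rmult_minus_distr_l. }
    split. { intros T hT. apply hdiff; auto. }
    intros eps heps.
    destruct (hlim (eps/2) ltac:(lra)) as [M1 hM1]. destruct (slim (eps/2) ltac:(lra)) as [M2 hM2].
    exists (Rmax (Rmax M1 M2) 0). intros T hT.
    assert (hm1 := Rmax_l (Rmax M1 M2) 0). assert (hm2 := Rmax_r (Rmax M1 M2) 0).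
    assert (hm3 := Rmax_l M1 M2). assert (hm4 := Rmax_r M1 M2).
    assert (hT0 : 0 <= T) by lra.
    destruct (hint T hT0) as [pr].
    rewrite (proj2 (hdiff T hT0)). rewrite (RInt_Reals _ _ _ pr).
    assert (k1 := hM1 T pr ltac:(lra)). assert (k2 := hM2 T ltac:(lra)).
    rewrite heq in k2.
    set (l := (exp b - 1) / (b * (laplace_exp nu b - q))) in *.
    replace (RiemannInt pr - RInt (fun x => exp (- b * x) * ws (fl x)) 0 T) with
      ((RiemannInt pr - l) - (RInt (fun x => exp (- b * x) * ws (fl x)) 0 T - l)) by ring.
    eapply Rle_lt_trans. apply Rabs_triang. rewrite Rabs_Ropp. lra.
Qed.

Lemma Zt_INR (m : nat) : Zscale q W (INR m) - 1 = q * Sw a0 c0 m.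
Proof.
  unfold Zscale. rewrite Rfloor_INR.
  destruct (int_nat ws (fun _ => 1) (fun x => continuous_const _ x) m) as [he hv].
  assert (hext : forall x, Rmin 0 (INR m) < x < Rmax 0 (INR m) -> sf ws (fun _ => 1) x = W x).
  { intros x hx. rewrite Rmin_left in hx by apply pos_INR. unfold sf.
    rewrite (W_eq x) by lra. ring. }
  rewrite (Rint_val W 0 (INR m) (Sw a0 c0 m)). ring.
  - apply (ex_RInt_ext _ _ _ _ hext he).
  - rewrite <- (RInt_ext _ _ _ _ hext). rewrite hv.
    clear. induction m. reflexivity.
    rewrite sum_range_S, IHm. rewrite (RInt_const (V:=R_CompleteNormedModule)).
    replace (S m - 1)%nat with m by lia. rewrite S_INR.
    unfold scal; simpl; unfold mult; simpl. unfold ws. ring.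
Qed.

End MAIN.

Lemma INR_sub1 (n k : nat) : (k <= S n)%nat -> INR n + 1 - INR k = INR (S n - k).
Proof. intros h. rewrite minus_INR by exact h. rewrite S_INR. ring. Qed.

Theorem corollary3p4 (nu : Z -> R) (q : R) (W : R -> R)
  (hnu : skip_free_levy nu) (hq : 0 <= q) (hW : is_scale_W nu q W) :
  let Zt := fun x => Zscale q W x - 1 in
  W 0 = 1 / nu 1%Z /\
  (forall n : nat,
     W (INR n + 1) = W 0 + sum_range (fun k =>
        W (INR n + 1 - INR k) * ((q + nu_tail nu k) / nu 1%Z)) (S n)) /\
  Zt 0 = 0 /\
  (forall n : nat,
     Zt (INR n + 1) = (INR n + 1) * (q / nu 1%Z) + sum_range (fun k =>
        Zt (INR n + 1 - INR k) * ((q + nu_tail nu k) / nu 1%Z)) n).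
Proof.
  cbv beta zeta.
  assert (hWe := W_eq nu q W hnu hq hW).
  assert (hW0 : W 0 = 1 / nu 1%Z).
  { rewrite hWe by lra. rewrite (fl_unique 0 0) by (simpl; lra). reflexivity. }
  split; [exact hW0|]. split.
  - intros n. rewrite hWe by (assert (h := pos_INR n); lra).
    rewrite (fl_unique _ (S n)) by (rewrite S_INR; lra).
    unfold ws. rewrite w_rec. rewrite hW0. f_equal.
    apply sum_range_ext_in. intros k hk. rewrite INR_sub1 by lia.
    rewrite hWe by apply pos_INR. rewrite (fl_unique (INR (S n - k)) (S n - k)) by lra. reflexivity.
  - split.
    + assert (h := Zt_INR nu q W hnu hq hW 0). simpl INR in h. simpl Sw in h. lra.
    + intros n. replace (INR n + 1) with (INR (S n)) at 1 by apply S_INR.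
      rewrite (Zt_INR nu q W hnu hq hW (S n)). rewrite Sw_rec.
      rewrite (sum_range_ext_in (fun k => (Zscale q W (INR n + 1 - INR k) - 1) * ((q + nu_tail nu k) / nu 1%Z)) (fun k => q * (Sw (a0 nu) (c0 nu q) (S n - k) * c0 nu q k))).
      2:{ intros k hk. rewrite INR_sub1 by lia. rewrite (Zt_INR nu q W hnu hq hW). unfold c0, cc, nu1. ring. }
      rewrite sum_range_scal. rewrite S_INR. unfold a0, ww0, nu1. field.
      apply Rgt_not_eq. apply (nu1_pos nu hnu).
Qed.
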